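(* Let $V=\{\mathbf{v}_1,\dots,\mathbf{v}_m\}$ and $\tilde V=\{\tilde{\mathbf{v}}_1,\dots,\tilde{\mathbf{v}}_m\}$ be subsets of $\mathbb{R}^\ell$ whose open convex hulls are given by $\mathrm{Co}(V)=\{\mathbf{x}:A\mathbf{x}\prec\mathbf{b}\}$ and $\mathrm{Co}(\tilde V)=\{\mathbf{x}:\tilde A\mathbf{x}\prec\tilde{\mathbf{b}}\}$, where the rows of $A$ and $\tilde A$ are unit vectors. Let $\varepsilon>0$. If $\mathbf{x}\in\mathbb{R}^\ell$ satisfies $A\mathbf{x}\prec\mathbf{b}-\varepsilon\mathbf{1}$ and $\|\mathbf{v}_i-\tilde{\mathbf{v}}_i\|_2<\varepsilon$ for all $i$, then $\tilde A\mathbf{x}\prec\tilde{\mathbf{b}}$.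
   Context: $\prec$ denotes strict entrywise inequality of vectors and $\mathbf{1}$ the all-ones vector of the appropriate size. $\mathrm{Co}(S)$ denotes the open convex hull (interior of the convex hull) of $S$. *)

(* Defs.v *)
From mathcomp Require Import all_boot all_order all_algebra.
From mathcomp Require Import reals.
Set Implicit Arguments. Unset Strict Implicit. Unset Printing Implicit Defensive.
Import Order.TTheory GRing.Theory Num.Theory.
Local Open Scope ring_scope.

Definition norm2 (R : realType) (l : nat) (x : 'cV[R]_l) : R :=
  Num.sqrt (\sum_(j < l) x j 0 ^+ 2).

Definition convhull (R : realType) (l m : nat) (V : 'I_m -> 'cV[R]_l)
    (y : 'cV[R]_l) : Prop :=
  exists w : 'I_m -> R,
    (forall i, 0 <= w i) /\ \sum_(i < m) w i = 1 /\ y = \sum_(i < m) w i *: V i.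

(* Open convex hull Co(V): interior (Euclidean topology) of the convex hull. *)
Definition open_convhull (R : realType) (l m : nat) (V : 'I_m -> 'cV[R]_l)
    (x : 'cV[R]_l) : Prop :=
  exists r : R, 0 < r /\
    forall y : 'cV[R]_l, norm2 (y - x) < r -> convhull V y.

Definition vlt (R : realType) (k : nat) (u v : 'cV[R]_k) : Prop :=
  forall i, u i 0 < v i 0.

Definition unit_rows (R : realType) (k l : nat) (A : 'M[R]_(k, l)) : Prop :=
  forall i, norm2 (row i A)^T = 1.

(* Main.v *)
Require Import Defs.
From mathcomp Require Import all_boot all_order all_algebra.
From mathcomp Require Import reals.
From mathcomp Require Import ring lra.
Import Order.TTheory GRing.Theory Num.Theory.
Local Open Scope ring_scope.
Set Implicit Arguments. Unset Strict Implicit.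



Section Aux.
Variable R : realType.
Variable l : nat.
Implicit Types u v w d : 'cV[R]_l.

Definition dot u v : R := \sum_j u j 0 * v j 0.

Lemma norm2E u : norm2 u = Num.sqrt (dot u u).
Proof. by rewrite /norm2 /dot; congr Num.sqrt; apply: eq_bigr => j _; rewrite expr2. Qed.

Lemma dotC u v : dot u v = dot v u.
Proof. by apply: eq_bigr => j _; rewrite mulrC. Qed.

Lemma dotDr u v w : dot u (v + w) = dot u v + dot u w.
Proof. by rewrite /dot -big_split; apply: eq_bigr => j _; rewrite mxE mulrDr. Qed.

Lemma dotZr u a v : dot u (a *: v) = a * dot u v.
Proof. by rewrite /dot mulr_sumr; apply: eq_bigr => j _; rewrite mxE mulrCA. Qed.

Lemma dotNr u v : dot u (- v) = - dot u v.
Proof. by rewrite /dot -sumrN; apply: eq_bigr => j _; rewrite mxE mulrN. Qed.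

Lemma dotBr u v w : dot u (v - w) = dot u v - dot u w.
Proof. by rewrite dotDr dotNr. Qed.

Lemma dotDl u v w : dot (v + w) u = dot v u + dot w u.
Proof. by rewrite !(dotC _ u) dotDr. Qed.
Lemma dotZl u a v : dot (a *: v) u = a * dot v u.
Proof. by rewrite !(dotC _ u) dotZr. Qed.
Lemma dotNl u v : dot (- v) u = - dot v u.
Proof. by rewrite !(dotC _ u) dotNr. Qed.
Lemma dotBl u v w : dot (v - w) u = dot v u - dot w u.
Proof. by rewrite !(dotC _ u) dotBr. Qed.

Lemma dot0r u : dot u 0 = 0.
Proof. by rewrite /dot big1 // => j _; rewrite mxE mulr0. Qed.

Lemma dot_sumr m u (c : 'I_m -> R) (F : 'I_m -> 'cV[R]_l) :
  dot u (\sum_i c i *: F i) = \sum_i c i * dot u (F i).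
Proof.
rewrite /dot; under eq_bigr do rewrite summxE mulr_sumr.
rewrite exchange_big /=; apply: eq_bigr => i _; rewrite mulr_sumr.
by apply: eq_bigr => j _; rewrite mxE mulrCA.
Qed.

Lemma dot_ge0 u : 0 <= dot u u.
Proof. by apply: sumr_ge0 => j _; rewrite -expr2 sqr_ge0. Qed.

Lemma dot_eq0 u : dot u u = 0 -> u = 0.
Proof.
move=> h; apply/matrixP => j k; rewrite (ord1 k) mxE.
have H : forall i : 'I_l, true -> 0 <= u i 0 * u i 0.
  by move=> i _; rewrite -expr2 sqr_ge0.
have := psumr_eq0P H h (i:=j) isT.
by move=> /eqP; rewrite mulf_eq0 orbb => /eqP.
Qed.

Lemma mulmx_dot k (A : 'M[R]_(k, l)) y i : (A *m y) i 0 = dot (row i A)^T y.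
Proof. by rewrite mxE; apply: eq_bigr => j _; rewrite !mxE. Qed.

Lemma cs2 u d s : 2 * s * dot u d <= s ^+ 2 * dot u u + dot d d.
Proof.
have := dot_ge0 (s *: u - d).
rewrite !(dotBl, dotBr, dotZl, dotZr) (dotC d u).
set a := dot u u; set b := dot u d; set c := dot d d. lra.
Qed.

Lemma cs_unit u d : dot u u = 1 -> dot u d <= norm2 d.
Proof.
move=> hu; rewrite norm2E.
have [d0|dn0] := eqVneq (dot d d) 0.
  by rewrite (dot_eq0 d0) dot0r sqrtr_ge0.
have hs : 0 < Num.sqrt (dot d d) by rewrite sqrtr_gt0 lt_def dn0 dot_ge0.
have hc := sqr_sqrtr (dot_ge0 d).
have := cs2 u d (Num.sqrt (dot d d)); rewrite hu.
move: hs hc; set s := Num.sqrt _; set c := dot d d; set b := dot u d. nra.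
Qed.

Lemma unit_le1 u v : dot u u = 1 -> dot v v = 1 -> dot u v <= 1.
Proof. move=> hu hv; have := cs2 u v 1; rewrite hu hv; lra. Qed.

Lemma norm2Z a v : norm2 (a *: v) = `|a| * norm2 v.
Proof.
rewrite !norm2E dotZl dotZr mulrA -expr2 sqrtrM ?sqr_ge0 // sqrtr_sqr //.
Qed.

Lemma norm2_ge0 v : 0 <= norm2 v.
Proof. by rewrite norm2E sqrtr_ge0. Qed.

Lemma norm2_0 : norm2 (0 : 'cV[R]_l) = 0.
Proof. by rewrite norm2E dot0r sqrtr0. Qed.

Lemma coord_le v j : `|v j 0| <= norm2 v.
Proof.
rewrite norm2E -sqrtr_sqr ler_sqrt ?dot_ge0 //.
rewrite /dot (bigD1 j) //= expr2 lerDl; apply: sumr_ge0 => i _.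
by rewrite -expr2 sqr_ge0.
Qed.

End Aux.


Section Aux2.
Variable R : realType.
Variables l m : nat.
Variable V : 'I_m -> 'cV[R]_l.

Lemma conv_comb y1 y2 (t : R) : convhull V y1 -> convhull V y2 -> 0 <= t -> t <= 1 ->
  convhull V ((1 - t) *: y1 + t *: y2).
Proof.
move=> [w1 [h1 [s1 e1]]] [w2 [h2 [s2 e2]]] t0 t1.
exists (fun i => (1 - t) * w1 i + t * w2 i); split; [|split].
- by move=> i /=; rewrite addr_ge0 // mulr_ge0 // subr_ge0.
- by rewrite big_split /= -!mulr_sumr s1 s2 !mulr1 subrK.
- rewrite e1 e2 !scaler_sumr -big_split /=; apply: eq_bigr => i _.
  by rewrite !scalerA -scalerDl.
Qed.

Lemma conv_vertex i : convhull V (V i).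
Proof.
exists (fun j => (j == i)%:R); split; [|split].
- by move=> j; rewrite ler0n.
- by rewrite (bigD1 i) //= eqxx big1 ?addr0 // => j /negPf ->.
- rewrite (bigD1 i) //= eqxx scale1r big1 ?addr0 // => j /negPf ->.
  by rewrite scale0r.
Qed.

Lemma conv_dot u k c : convhull V k -> (forall i, dot u (V i) = c) -> dot u k = c.
Proof.
move=> [w [h [s ->]]] hc; rewrite dot_sumr.
under eq_bigr do rewrite hc; by rewrite -mulr_suml s mul1r.
Qed.

Lemma conv_pos (w : 'I_m -> R) : \sum_i w i = 1 -> exists i, w i != 0.
Proof.
move=> s; case: (boolP [exists i, w i != 0]) => [/existsP //|/negP H].
suff : \sum_i w i = 0 by rewrite s => /eqP; rewrite oner_eq0.
apply: big1 => i _; apply/eqP; apply/negPn; apply/negP => hi.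
by apply: H; apply/existsP; exists i.
Qed.

Lemma sum_lt (w F G : 'I_m -> R) : (forall i, 0 <= w i) -> \sum_i w i = 1 ->
  (forall i, F i < G i) -> \sum_i w i * F i < \sum_i w i * G i.
Proof.
move=> h0 s hFG; have [i hi] := conv_pos s.
rewrite -subr_gt0 -sumrB.
have H : forall j : 'I_m, true -> 0 <= w j * G j - w j * F j.
  by move=> j _; rewrite -mulrBr mulr_ge0 // subr_ge0 ltW.
rewrite lt_def sumr_ge0 ?andbT //; apply/eqP => /(psumr_eq0P H) /(_ i isT).
move/eqP; rewrite -mulrBr mulf_eq0 (negPf hi) /= subr_eq0 => /eqP e.
by have := hFG i; rewrite e ltxx.
Qed.

End Aux2.

Lemma lim0 (R : realType) (c h b : R) :
  (forall t, 0 < t -> t <= 1 -> c - t * h < b) -> c <= b.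
Proof.
move=> H; rewrite leNgt; apply/negP => cb.
set g := c - b.
have g0 : 0 < g by rewrite subr_gt0.
have d0 : 0 < g + `|h| by apply: ltr_wpDr.
set t := g / (g + `|h|).
have t0 : 0 < t by apply: divr_gt0.
have t1 : t <= 1 by rewrite ler_pdivrMr // mul1r lerDl.
have := H t t0 t1.
have td : t * (g + `|h|) = g by rewrite /t divfK // gt_eqF.
have := ler_norm h.
move: td t0 g0; rewrite /g; set t' := t; set a := `|h|. nra.
Qed.


Lemma unit_rows_dot (R : realType) k l (A : 'M[R]_(k, l)) :
  unit_rows A -> forall i, dot (row i A)^T (row i A)^T = 1.
Proof.
move=> h i; by rewrite -(sqr_sqrtr (dot_ge0 _)) -norm2E h expr1n.
Qed.

Lemma dir_lemma (R : realType) l m k (V Vt : 'I_m -> 'cV[R]_l)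
  (A : 'M[R]_(k, l)) (b : 'cV[R]_k) (hA : unit_rows A)
  (hCo : forall x, open_convhull V x <-> vlt (A *m x) b)
  (eps : R) (heps : 0 < eps) (x : 'cV[R]_l)
  (hx : vlt (A *m x) (b - eps *: const_mx 1))
  (hclose : forall i, norm2 (V i - Vt i) < eps) u :
  dot u u = 1 -> exists kk, convhull Vt kk /\ dot u x < dot u kk.
Proof.
move=> hu.
set y := x + eps *: u.
have hy : vlt (A *m y) b.
  move=> i; rewrite mulmx_dot dotDr dotZr -mulmx_dot.
  have := hx i; rewrite !mxE.
  have := unit_le1 (unit_rows_dot hA i) hu.
  set a := dot _ _; set c := (A *m x) i 0. nra.
have [r [r0 Hr]] := (hCo y).2 hy.
have [w [w0 [ws ye]]] : convhull V y by apply: Hr; rewrite subrr norm2_0.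
exists (\sum_i w i *: Vt i); split; first by exists w.
have e1 : dot u y = dot u x + eps by rewrite /y dotDr dotZr hu mulr1.
have e2 : dot u y = \sum_i w i * dot u (V i) by rewrite {1}ye dot_sumr.
rewrite dot_sumr.
have := @sum_lt R m w (fun i => dot u (V i) - eps) (fun i => dot u (Vt i)) w0 ws.
have Hlt : forall i, dot u (V i) - eps < dot u (Vt i).
  move=> i; have := cs_unit (V i - Vt i) hu; rewrite dotBr.
  have := hclose i; lra.
move=> /(_ Hlt).
under eq_bigr do rewrite mulrBr.
rewrite sumrB -mulr_suml ws mul1r -e2 e1.
lra.
Qed.


Lemma degenerate_case (R : realType) l m (Vt : 'I_m -> 'cV[R]_l) (i0 : 'I_m)
  (x : 'cV[R]_l)
  (Dir : forall u, dot u u = 1 -> exists kk, convhull Vt kk /\ dot u x < dot u kk)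
  (D : 'M[R]_(m, l)) (hD : D = \matrix_(i, j) (Vt i j 0 - Vt i0 j 0)) :
  (\rank D < l)%N -> False.
Proof.
move=> lt.
pose K := kermx D^T.
have rK : \rank K = (l - \rank D)%N by rewrite mxrank_ker mxrank_tr.
case: (boolP [exists j, row j K != 0]) => [/existsP [j hj]|/negP H]; last first.
  have K0 : K = 0.
    apply/row_matrixP => j; rewrite row0; apply/eqP; apply/negPn/negP => hj.
    by apply: H; apply/existsP; exists j.
  by move: rK; rewrite K0 mxrank0 => /esym/eqP; rewrite subn_eq0 leqNgt lt.
set w := row j K.
have wD : w *m D^T = 0 by rewrite -row_mul mulmx_ker row0.
set u := w^T.
have Du : D *m u = 0 by have := congr1 trmx wD; rewrite trmx_mul trmxK trmx0.
have un0 : dot u u != 0.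
  apply/eqP => /dot_eq0 /(congr1 trmx); rewrite trmxK trmx0 => h.
  by move: hj; rewrite -/w h eqxx.
have upos : 0 < dot u u by rewrite lt_def un0 dot_ge0.
set c := Num.sqrt (dot u u).
have c0 : 0 < c by rewrite sqrtr_gt0.
have cc : c ^+ 2 = dot u u by rewrite sqr_sqrtr // dot_ge0.
set u' := c^-1 *: u.
have hu' : dot u' u' = 1.
  rewrite dotZl dotZr -cc; field; exact: lt0r_neq0.
have hv : forall i, dot u' (Vt i) = dot u' (Vt i0).
  move=> i; rewrite !dotZl; congr (_ * _).
  have := congr1 (fun M : 'M[R]_(m,1) => M i 0) Du; rewrite /= [X in _ = X]mxE mxE hD.
  under eq_bigr do rewrite mxE mulrBl.
  rewrite sumrB => /eqP; rewrite subr_eq0 => /eqP e.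
  by rewrite /dot; under eq_bigr do rewrite mulrC; rewrite e;
    apply: eq_bigr => j' _; rewrite mulrC.
have [k1 [hk1 lt1]] := Dir u' hu'.
have hu2 : dot (- u') (- u') = 1 by rewrite dotNl dotNr opprK.
have [k2 [hk2 lt2]] := Dir (- u') hu2.
rewrite (conv_dot hk1 hv) in lt1.
rewrite !dotNl (conv_dot hk2 hv) in lt2.
rewrite ltrN2 in lt2; by have := lt_trans lt1 lt2; rewrite ltxx.
Qed.


Lemma single_le (R : realType) m (F : 'I_m -> R) i :
  (forall j, 0 <= F j) -> F i <= \sum_j F j.
Proof.
move=> h; rewrite (bigD1 i) //= lerDl; exact: sumr_ge0.
Qed.

Lemma full_case (R : realType) l m (Vt : 'I_m -> 'cV[R]_l) (i0 : 'I_m)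
  (D : 'M[R]_(m, l)) (hD : forall i j, D i j = Vt i j 0 - Vt i0 j 0)
  (B : 'M[R]_(l, m)) (hB : forall q : 'rV[R]_l, q = q *m B *m D) :
  exists p r, 0 < r /\ forall y, norm2 (y - p) < r -> convhull Vt y.
Proof.
have m0 : (0 < m)%N := leq_ltn_trans (leq0n _) (ltn_ord i0).
set mR := m%:R : R.
have mR0 : 0 < mR by rewrite ltr0n.
set e := mR^-1.
have me : mR * e = 1 by rewrite mulfV // gt_eqF.
have e0 : 0 < e by rewrite invr_gt0.
set C := \sum_i \sum_j `|B j i|.
have C0 : 0 <= C by apply: sumr_ge0 => i _; apply: sumr_ge0 => j _.
set p := \sum_i e *: Vt i.
set r := (2 * mR * (C + 1))^-1.
have C1 : 0 < C + 1 by rewrite ltr_wpDl.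
have r0 : 0 < r by rewrite invr_gt0 !mulr_gt0.
have rC : r * (C + 1) = e / 2 by rewrite /r /e; field; lra.
exists p, r; split => // y hy.
set q := y - p.
set alpha := fun i => \sum_j q j 0 * B j i.
have hq : forall j0, q j0 0 = \sum_i alpha i * D i j0.
  move=> j0.
  have := hB q^T.
  move/(congr1 (fun M : 'M[R]_(1, l) => M 0 j0)); rewrite mxE => ->.
  rewrite mxE; apply: eq_bigr => i _; rewrite mxE; congr (_ * _).
  by apply: eq_bigr => j _; rewrite mxE.
have hS : \sum_i `|alpha i| <= e / 2.
  have h1 : forall i, `|alpha i| <= norm2 q * \sum_j `|B j i|.
    move=> i; apply: le_trans (ler_norm_sum _ _ _) _.
    rewrite mulr_sumr; apply: ler_sum => j _; rewrite normrM ler_wpM2r //.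
    exact: coord_le.
  apply: le_trans (ler_sum _ (fun i _ => h1 i)) _.
  rewrite -mulr_sumr -/C -rC.
  have := norm2_ge0 q; move: hy; rewrite -/q. nra.
set S := \sum_i alpha i.
have hSn : `|S| <= \sum_i `|alpha i| by apply: ler_norm_sum.
exists (fun i => e + alpha i - (i == i0)%:R * S); split; [|split].
- move=> i /=.
  have hi : `|alpha i| <= \sum_i `|alpha i| by apply: single_le.
  have := ler_norm (- alpha i); have := ler_norm S; rewrite normrN.
  case: (i == i0); rewrite /= ?mul1r ?mul0r; lra.
- rewrite sumrB big_split /= sumr_const card_ord -/S.
  rewrite (bigD1 i0) //= eqxx mul1r big1 ?addr0; last first.
    by move=> j /negPf ->; rewrite mul0r.
  by rewrite -(mulr_natl e) -/mR me addrK.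
- have yq : y = p + q by rewrite /q addrC subrK.
  apply/matrixP => j k; rewrite (ord1 k) summxE yq mxE hq summxE.
  under eq_bigr do rewrite mxE.
  under [X in _ = X]eq_bigr do rewrite mxE mulrBl mulrDl.
  rewrite sumrB big_split /=.
  have -> : \sum_i (i == i0)%:R * S * Vt i j 0 = S * Vt i0 j 0.
    rewrite (bigD1 i0) //= eqxx mul1r big1 ?addr0 // => i' /negPf ->.
    by rewrite !mul0r.
  rewrite -addrA; congr (_ + _).
  under eq_bigr do rewrite hD mulrBr.
  by rewrite sumrB -mulr_suml.
Qed.

Theorem lemma12 (R : realType) (l m k kt : nat)
    (V Vt : 'I_m -> 'cV[R]_l)
    (A : 'M[R]_(k, l)) (b : 'cV[R]_k)
    (At : 'M[R]_(kt, l)) (bt : 'cV[R]_kt)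
    (hA : unit_rows A) (hAt : unit_rows At)
    (hCo : forall x, open_convhull V x <-> vlt (A *m x) b)
    (hCot : forall x, open_convhull Vt x <-> vlt (At *m x) bt)
    (eps : R) (heps : 0 < eps) (x : 'cV[R]_l)
    (hx : vlt (A *m x) (b - eps *: const_mx 1))
    (hclose : forall i, norm2 (V i - Vt i) < eps) :
  vlt (At *m x) bt.
Proof.
have Dir := dir_lemma hA hCo heps hx hclose.
have hx' : vlt (A *m x) b.
  move=> i; have := hx i; rewrite !mxE => h; apply: lt_trans h _.
  by rewrite mulr1 ltrBlDr ltrDl.
have [r [r0 Hr]] := (hCo x).2 hx'.
have [w [_ [ws _]]] : convhull V x by apply: Hr; rewrite subrr norm2_0.
have [i0 _] := conv_pos ws.
have [p [rp [rp0 Hp]]] : exists p r, 0 < r /\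
    forall y, norm2 (y - p) < r -> convhull Vt y.
  pose D := \matrix_(i, j) (Vt i j 0 - Vt i0 j 0) : 'M[R]_(m, l).
  have [lt|ge] := ltnP (\rank D) l.
    by exfalso; apply: (@degenerate_case _ _ _ Vt i0 x Dir D erefl lt).
  have full : row_full D by rewrite /row_full eqn_leq rank_leq_col ge.
  have [B hB] := row_fullP full.
  apply: (@full_case _ _ _ Vt i0 D _ B) => [i j|q]; first by rewrite mxE.
  by rewrite -mulmxA hB mulmx1.
have hp : vlt (At *m p) bt by apply/hCot; exists rp.
move=> i.
set a := (row i At)^T.
have ha := unit_rows_dot hAt i.
have [kk [hk ltk]] := Dir a ha.
rewrite mulmx_dot -/a.
apply: lt_le_trans ltk _.
apply: (lim0 (h := dot a kk - dot a p)) => t t0 t1.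
set z := (1 - t) *: kk + t *: p.
have hz : open_convhull Vt z.
  exists (t * rp); split; first by rewrite mulr_gt0.
  move=> y hy.
  have hy' : convhull Vt (p + t^-1 *: (y - z)).
    apply: Hp; rewrite (addrC p) addrK norm2Z ger0_norm ?invr_ge0 ?ltW //.
    by rewrite mulrC ltr_pdivrMr // mulrC.
  have -> : y = (1 - t) *: kk + t *: (p + t^-1 *: (y - z)).
    apply/matrixP => j k'; rewrite !mxE; field; exact: lt0r_neq0.
  exact: conv_comb hk hy' (ltW t0) t1.
have := (hCot z).1 hz i; rewrite mulmx_dot -/a /z dotDr !dotZr.
suff -> : dot a kk - t * (dot a kk - dot a p) = (1 - t) * dot a kk + t * dot a p by [].
ring.
Qed.
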